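(* Let $\mathbb{K}$ be a field, $n>1$, $a=\sum_{j=0}^d c_j s^j\in\mathbb{K}[s]^n$ a non-zero row vector of degree $d$, and $A\in\mathbb{K}^{(2d+1)\times n(d+1)}$ the matrix whose $(i,\,kn+r)$ entry ($1\le i\le 2d+1$, $0\le k\le d$, $1\le r\le n$) is the $r$-th entry of $c_{i-1-k}$ (zero if $i-1-k\notin\{0,\dots,d\}$). Let $q$ be the set of non-pivotal indices of $A$. If $j\in q$, then $j+kn\in q$ for all integers $0\le k\le\left\lfloor\frac{n(d+1)-j}{n}\right\rfloor$. Moreover, if $A_{*j}=\sum_{r<j}\alpha_r A_{*r}$ with $\alpha_r\in\mathbb{K}$, then $A_{*j+kn}=\sum_{r<j}\alpha_r A_{*r+kn}$ for all such $k$.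
   Context: $A_{*j}$ denotes the $j$-th column of $A$. A column of a matrix is called pivotal if it is either the first column and non-zero, or it is linearly independent of all previous columns; the other columns are non-pivotal, and their indices are the non-pivotal indices. *)

(* Defs.v *)
From mathcomp Require Import all_boot all_order all_algebra.
Set Implicit Arguments. Unset Strict Implicit. Unset Printing Implicit Defensive.
Import GRing.Theory.
Local Open Scope ring_scope.

(* Conventions: all indices are 0-based (row i, column j, coefficient index). *)

Definition polyrow_deg (K : fieldType) (n : nat) (a : 'rV[{poly K}]_n) : nat :=
  \max_(r < n) (size (a ord0 r)).-1.

(* r-th entry (0-based) of the coefficient vector c_m of a = sum_m c_m s^m;
   zero if r is out of range. *)
Definition coefrow (K : fieldType) (n : nat) (a : 'rV[{poly K}]_n) (m r : nat) : K :=
  odflt 0 (omap (fun r' : 'I_n => (a ord0 r')`_m) (insub r)).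

(* The (2d+1) x n(d+1) block Toeplitz matrix: entry (i, k*n + r)
   (0 <= i <= 2d, 0 <= k <= d, 0 <= r < n) is the r-th entry of c_{i-k},
   and zero when i - k < 0 (for i - k > d the coefficient is zero anyway). *)
Definition coefmx (K : fieldType) (n d : nat) (a : 'rV[{poly K}]_n)
  : 'M[K]_((2 * d).+1, n * d.+1) :=
  \matrix_(i < (2 * d).+1, j < n * d.+1)
    (if (j %/ n <= i)%N then coefrow a (i - j %/ n) (j %% n) else 0).

(* Column j (0-based, as a natural number) of A; zero if j is out of range. *)
Definition colx (K : fieldType) (m N : nat) (A : 'M[K]_(m, N)) (j : nat) : 'cV[K]_m :=
  odflt 0 (omap (fun j' : 'I_N => col j' A) (insub j)).

Definition dep_on_prev (K : fieldType) (m N : nat) (A : 'M[K]_(m, N)) (j : nat) : Prop :=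
  exists alpha : nat -> K, colx A j = \sum_(r < j) alpha r *: colx A r.

Definition pivotal (K : fieldType) (m N : nat) (A : 'M[K]_(m, N)) (j : nat) : Prop :=
  (j = 0%N /\ colx A 0 != 0) \/ ~ dep_on_prev A j.

Definition nonpivotal (K : fieldType) (m N : nat) (A : 'M[K]_(m, N)) (j : nat) : Prop :=
  (j < N)%N /\ ~ pivotal A j.

(* Main.v *)
Require Import Defs.
From mathcomp Require Import all_boot all_order all_algebra.
From mathcomp Require Import zify.
Set Implicit Arguments. Unset Strict Implicit.
Import GRing.Theory.
Local Open Scope ring_scope.

Definition shiftc (K : fieldType) (m : nat) (v : 'cV[K]_m.+1) : 'cV[K]_m.+1 :=
  \matrix_(i, l) (if (0 < i)%N then v (inord i.-1) l else 0).

Lemma shiftc_sum (K : fieldType) (m j : nat) (alpha : nat -> K) (v : nat -> 'cV[K]_m.+1) :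
  shiftc (\sum_(r < j) alpha r *: v r) = \sum_(r < j) alpha r *: shiftc (v r).
Proof.
apply/matrixP => i l; rewrite !mxE summxE; case: ifP => h.
  rewrite summxE; apply: eq_bigr => r _; rewrite !mxE h //.
by rewrite summxE big1 // => r _; rewrite !mxE h mulr0.
Qed.

Lemma iter_shiftc_sum (K : fieldType) (m j k : nat) (alpha : nat -> K) (v : nat -> 'cV[K]_m.+1) :
  iter k (@shiftc K m) (\sum_(r < j) alpha r *: v r) =
  \sum_(r < j) alpha r *: iter k (@shiftc K m) (v r).
Proof.
elim: k => [//|k IH]; by rewrite iterS IH (@shiftc_sum K m j alpha (fun r => iter k (@shiftc K m) (v r))).
Qed.

Lemma colxE (K : fieldType) (m N : nat) (A : 'M[K]_(m, N)) (j : nat) (hj : (j < N)%N) :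
  colx A j = col (Ordinal hj) A.
Proof. by rewrite /colx insubT. Qed.

Lemma colx_shift (K : fieldType) (n d : nat) (a : 'rV[{poly K}]_n) (m : nat) :
  (0 < n)%N -> (m + n < n * d.+1)%N ->
  colx (coefmx d a) (m + n) = shiftc (colx (coefmx d a) m).
Proof.
move=> n0 hmn.
have hm : (m < n * d.+1)%N by apply: leq_ltn_trans hmn; apply: leq_addr.
rewrite (colxE _ hmn) (colxE _ hm).
apply/matrixP => i l; rewrite !mxE /=.
rewrite divnDr ?dvdnn // divnn n0 modnDr.
case: i => [[|i] hi] /=.
  by rewrite addn1.
rewrite inordK; last by apply: ltnW.
by rewrite addn1 ltnS subSS.
Qed.

Lemma colx_iter (K : fieldType) (n d : nat) (a : 'rV[{poly K}]_n) (m k : nat) :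
  (0 < n)%N -> (m + k * n < n * d.+1)%N ->
  colx (coefmx d a) (m + k * n) = iter k (@shiftc K (2 * d)) (colx (coefmx d a) m).
Proof.
move=> n0; elim: k => [|k IH] h; first by rewrite mul0n addn0.
rewrite /= -IH; last by apply: leq_ltn_trans h; rewrite leq_add2l leq_mul2r leqnSn orbT.
have e : (m + k.+1 * n = (m + k * n) + n)%N by rewrite mulSnr addnA.
by rewrite e colx_shift // -e.
Qed.

Theorem lemma6 (K : fieldType) (n d : nat) (a : 'rV[{poly K}]_n)
  (hn : (1 < n)%N) (ha : a != 0) (hd : polyrow_deg a = d) :
  let A := coefmx d a in
  (forall j : nat, nonpivotal A j ->
     forall k : nat, (k <= (n * d.+1 - j.+1) %/ n)%N -> nonpivotal A (j + k * n)%N)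
  /\
  (forall (j : nat) (alpha : nat -> K), (j < n * d.+1)%N ->
     colx A j = \sum_(r < j) alpha r *: colx A r ->
     forall k : nat, (k <= (n * d.+1 - j.+1) %/ n)%N ->
       colx A (j + k * n)%N = \sum_(r < j) alpha r *: colx A (r + k * n)%N).
Proof.
move=> A.
have n0 : (0 < n)%N by apply: ltnW.
have bound : forall j k, (j < n * d.+1)%N -> (k <= (n * d.+1 - j.+1) %/ n)%N ->
    (j + k * n < n * d.+1)%N.
  move=> j k hj hk.
  have : (k * n <= n * d.+1 - j.+1)%N.
    apply: leq_trans (leq_divM _ n); by rewrite leq_mul2r hk orbT.
  move=> h; lia.
have part2 : forall (j : nat) (alpha : nat -> K), (j < n * d.+1)%N ->
     colx A j = \sum_(r < j) alpha r *: colx A r ->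
     forall k : nat, (k <= (n * d.+1 - j.+1) %/ n)%N ->
       colx A (j + k * n)%N = \sum_(r < j) alpha r *: colx A (r + k * n)%N.
  move=> j alpha hj hA k hk.
  have hb := bound _ _ hj hk.
  rewrite colx_iter // hA iter_shiftc_sum; apply: eq_bigr => r _.
  rewrite colx_iter //; apply: leq_ltn_trans hb; by rewrite leq_add2r ltnW.
split => //.
move=> j [hj hnp] k hk; split; first exact: bound.
move=> [[hz h0]|hdep]; apply: hnp.
  have k0 : k = 0%N by move: hz {hk}; case: k => [|k] //; rewrite mulSn; lia.
  by left; move: hz; rewrite k0 mul0n addn0 => ->.
right => -[alpha hA]; apply: hdep.
have hb := bound _ _ hj hk.
exists (fun m => if (k * n <= m)%N then alpha (m - k * n)%N else 0).
rewrite (part2 j alpha hj hA k hk).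
rewrite -(big_mkord xpredT (fun r => alpha r *: colx A (r + k * n))).
rewrite -(big_mkord xpredT (fun m => (if (k * n <= m)%N then alpha (m - k * n)%N else 0) *: colx A m)).
rewrite (@big_cat_nat _ _ _ (k * n) 0 (j + k * n)) ?leq_addl //=.
rewrite [X in _ = X + _](_ : _ = 0) ?add0r; last first.
  rewrite big_nat_cond big1 // => m /andP [hm _].
  rewrite leqNgt; have -> : (m < k * n)%N by move: hm; lia.
  by rewrite scale0r.
have e : (k * n = 0 + k * n)%N by [].
rewrite {2}e big_addn addnK.
by apply: eq_bigr => m _; rewrite leq_addl addnK.
Qed.
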